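(* In the Classified Reallocation algorithm (with power-of-two laxities), suppose a client $c_i$ is reallocated to the big channel during the processing of a departure (because it lies in a $w$-channel with $w>2\tau$ after $\tau$ is updated). Let $n$ be the number of active clients at the time of this reallocation and $n'$ the number of active clients at the time of the last allocation of $c_i$. Then $n\le n'/2$.
   Context: Model: discrete time; each client $c_i$ has arrival time, departure time and laxity $w_i$ (a power of $2$), and must transmit at least once in every $w_i$ consecutive time steps while active; one transmission per channel per time step. A reallocation is a change of the channel of a client. For $x>0$, $\lceil\lceil x\rceil\rceil$ denotes the smallest power of $2$ not smaller than $x$. Classified Reallocation algorithm. Channels: one \emph{big channel} (all its clients transmit with period $\tau/2$) and \emph{$w$-channels} for powers of two $w$ (clients transmit with period $w$; at most $w$ clients; \emph{full} when holding $w$). State: $n$ (active clients, initially $0$), threshold $\tau$ (initially $2$). Arrival of $c_i$: $n\leftarrow n+1$. If $2\lceil\lceil n\rceil\rceil>\tau$: $\tau\leftarrow 2\lceil\lceil n\rceil\rceil$; each big-channel client $c_j$ with $w_j<\tau/2$ is reallocated to the non-full $w_j$-channel of minimum load (a new one reserved if needed); remaining big-channel clients get period $\tau/2$. Then if $w_i\ge\tau$, $c_i$ goes to the big channel; otherwise to the non-full $w_i$-channel of minimum load (new one reserved if needed). Departure of $c_i$ from channel $c$: $n\leftarrow n-1$. If $c$ is not the big channel: release $c$ if empty; otherwise if some $w_i$-channel $c'\ne c$ is not full, move one client from $c'$ to $c$. Then if $2\lceil\lceil n\rceil\rceil<\tau$: $\tau\leftarrow 2\lceil\lceil n\rceil\rceil$,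 big-channel clients get period $\tau/2$, and every $w$-channel with $w>2\tau$ has all its clients reallocated to the big channel and is released. *)

(* Defs.v *)
From mathcomp Require Import all_boot.
Set Implicit Arguments. Unset Strict Implicit. Unset Printing Implicit Defensive.

(* smallest power of 2 not smaller than x  (= 1 for x = 0) *)
Definition cpow2 (x : nat) : nat := 2 ^ up_log 2 x.

(* A w-channel is identified by a pair (w, j): its class w (a power of 2)
   and an index j distinguishing channels of the same class.
   The big channel is [None]; the w-channel (w,j) is [Some (w,j)]. *)
Definition chan := option (nat * nat).

(* An active client: ((identifier, laxity), channel). *)
Definition entry := ((nat * nat) * chan)%type.
Definition ent_id (e : entry) : nat := e.1.1.
Definition ent_w (e : entry) : nat := e.1.2.
Definition ent_ch (e : entry) : chan := e.2.

Record state := State {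
  cnt : nat;
  tau : nat;
  clients : seq entry
}.

Definition init : state := State 0 2 [::].

Inductive event :=
| Arrive (i w : nat)   (* client i arrives with laxity w *)
| Depart (i : nat).

(* Log of channel changes (allocations / reallocations), each tagged with
   the number n of active clients at the time it is performed. *)
Inductive label :=
| LAlloc (i n : nat)   (* client i is (re)allocated to a channel, other than below *)
| LToBig (i n : nat).  (* client i is reallocated to the big channel during a
                          departure, because its w-channel has w > 2 tau *)

Definition lab_client (l : label) : nat :=
  match l with LAlloc i _ => i | LToBig i _ => i end.
Definition lab_n (l : label) : nat :=
  match l with LAlloc _ n => n | LToBig _ n => n end.

(* load of the w-channel c : number of clients on it; a channel of load 0 is
   not in use (released / not reserved) *)
Definition load (cl : seq entry) (c : nat * nat) : nat :=
  count (fun e => ent_ch e == Some c) cl.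

(* c is a legal choice for "the non-full w-channel of minimum load
   (a new one reserved if needed)" *)
Definition place_ok (cl : seq entry) (w : nat) (c : nat * nat) : Prop :=
  c.1 = w /\ load cl c < w /\
  ( (0 < load cl c /\
       forall j, 0 < load cl (w, j) < w -> load cl c <= load cl (w, j))
  \/ (load cl c = 0 /\ forall j, ~ (0 < load cl (w, j) < w)) ).

Definition setch (cl : seq entry) (i : nat) (ch : chan) : seq entry :=
  map (fun e => if ent_id e == i then (e.1, ch) else e) cl.

Definition rem_client (i : nat) (cl : seq entry) : seq entry :=
  filter (fun e => ent_id e != i) cl.

(* arrival, threshold increase: the big-channel clients c_j with
   w_j < tau/2 are reallocated one at a time (in any order) *)
Inductive bigfix (n tau : nat) : seq entry -> seq label -> seq entry -> Prop :=
| bf_done cl :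
    (forall e, e \in cl -> ent_ch e = None -> ~ (ent_w e < tau %/ 2)) ->
    bigfix n tau cl [::] cl
| bf_step cl i w c L cl' :
    (i, w, None) \in cl -> w < tau %/ 2 -> place_ok cl w c ->
    bigfix n tau (setch cl i (Some c)) L cl' ->
    bigfix n tau cl (LAlloc i n :: L) cl'.

Definition arr_update (n1 tau0 : nat) (cl : seq entry)
    (tau1 : nat) (L : seq label) (cl1 : seq entry) : Prop :=
  if tau0 < 2 * cpow2 n1 then tau1 = 2 * cpow2 n1 /\ bigfix n1 tau1 cl L cl1
  else [/\ tau1 = tau0, L = [::] & cl1 = cl].

Definition arr_place (tau1 : nat) (cl : seq entry) (w : nat) (ch : chan) : Prop :=
  if tau1 <= w then ch = None else exists c, ch = Some c /\ place_ok cl w c.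

(* departure of a client of laxity w from channel ch; cl already without it *)
Definition dep_compact (n1 w : nat) (cl : seq entry) (ch : chan)
    (L : seq label) (cl1 : seq entry) : Prop :=
  match ch with
  | None => L = [::] /\ cl1 = cl
  | Some c =>
      if load cl c == 0 then L = [::] /\ cl1 = cl   (* c is released *)
      else
        ((forall c', c' <> c -> c'.1 = w -> ~ (0 < load cl c' < w))
           /\ L = [::] /\ cl1 = cl)
        \/ (exists c' e, c' <> c /\ c'.1 = w /\ 0 < load cl c' < w /\
                             e \in cl /\ ent_ch e = Some c' /\
                             L = [:: LAlloc (ent_id e) n1] /\
                             cl1 = setch cl (ent_id e) (Some c))
  end.

Definition exceeds (t : nat) (e : entry) : bool :=
  match ent_ch e with Some c => 2 * t < c.1 | None => false end.

Definition dep_tau (n1 tau0 : nat) (cl1 : seq entry) : nat * seq label * seq entry :=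
  if 2 * cpow2 n1 < tau0 then
    let t := 2 * cpow2 n1 in
    (t, [seq LToBig (ent_id e) n1 | e <- cl1 & exceeds t e],
        map (fun e => if exceeds t e then (e.1, None) else e) cl1)
  else (tau0, [::], cl1).

Inductive step : state -> event -> seq label -> state -> Prop :=
| StepArr st i w tau1 L1 cl1 ch :
    (exists k, w = 2 ^ k) ->
    i \notin map ent_id (clients st) ->
    arr_update (cnt st).+1 (tau st) (clients st) tau1 L1 cl1 ->
    arr_place tau1 cl1 w ch ->
    step st (Arrive i w) (L1 ++ [:: LAlloc i (cnt st).+1])
         (State (cnt st).+1 tau1 ((i, w, ch) :: cl1))
| StepDep st i w ch L1 cl1 :
    (i, w, ch) \in clients st ->
    dep_compact (cnt st).-1 w (rem_client i (clients st)) ch L1 cl1 ->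
    step st (Depart i)
         (L1 ++ (dep_tau (cnt st).-1 (tau st) cl1).1.2)
         (State (cnt st).-1 (dep_tau (cnt st).-1 (tau st) cl1).1.1
                (dep_tau (cnt st).-1 (tau st) cl1).2).

Inductive run : seq event -> state -> seq label -> Prop :=
| run0 : run [::] init [::]
| runS evs st L e L' st' :
    run evs st L -> step st e L' st' -> run (rcons evs e) st' (L ++ L').

Definition dflt_label : label := LAlloc 0 0.

(* Main.v *)
Require Import Defs.
From mathcomp Require Import all_boot.
From mathcomp Require Import zify.
Set Implicit Arguments. Unset Strict Implicit. Unset Printing Implicit Defensive.

Lemma cpow2_mono m n : m <= n -> cpow2 m <= cpow2 n.
Proof. by move=> h; rewrite /cpow2 leq_exp2l // leq_up_log. Qed.

Lemma leq_cpow2 n : n <= cpow2 n.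
Proof. exact: up_logP. Qed.

Lemma cpow2_double n : 0 < n -> cpow2 (2 * n) = 2 * cpow2 n.
Proof. by move=> h; rewrite /cpow2 up_logMp // expnS. Qed.

Lemma cpow2_key n n' : 4 * cpow2 n < 2 * cpow2 n' -> 2 * n <= n'.
Proof.
move=> h; rewrite leqNgt; apply/negP => lt.
have n0 : 0 < n by lia.
have := cpow2_mono (ltnW lt); rewrite cpow2_double // => h2. lia.
Qed.

Definition lastn (s : seq label) (i : nat) : nat :=
  foldl (fun a l => if lab_client l == i then lab_n l else a) 0 s.

Lemma lastn_cat s t i : i \notin map lab_client t -> lastn (s ++ t) i = lastn s i.
Proof.
rewrite /lastn foldl_cat; elim: t (foldl _ 0 s) => //= l t IH a.
rewrite in_cons negb_or => /andP[ne nt]. by rewrite eq_sym (negbTE ne) IH.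
Qed.

Lemma lastn_rcons s l i : lab_client l = i -> lastn (rcons s l) i = lab_n l.
Proof. by move=> h; rewrite /lastn -cats1 foldl_cat /= h eqxx. Qed.

Lemma map_setch cl i ch : map ent_id (setch cl i ch) = map ent_id cl.
Proof. by rewrite /setch -map_comp; apply: eq_map => e /=; case: ifP. Qed.

Lemma map1_setch cl i ch : map (fun e => e.1) (setch cl i ch) = map (fun e => e.1) cl.
Proof. by rewrite /setch -map_comp; apply: eq_map => e /=; case: ifP. Qed.

Lemma load_setch cl e0 ch x : uniq (map ent_id cl) -> e0 \in cl ->
  load (setch cl (ent_id e0) ch) x + (ent_ch e0 == Some x) = load cl x + (ch == Some x).
Proof.
elim: cl => //= e cl IH /andP[ni u]; rewrite in_cons => /orP[/eqP E|ein].
  subst e0.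
  rewrite eqxx /load /=. rewrite (_ : count _ (setch cl _ _) = count (fun e => ent_ch e == Some x) cl); first lia.
  rewrite /setch count_map; apply: eq_in_count => e' e'in /=.
  case: ifP => // /eqP h; case/negP: ni; apply/mapP; exists e' => //; by rewrite h.
have ne : ent_id e != ent_id e0.
  by apply/eqP => h; case/negP: ni; rewrite h; exact: map_f.
rewrite /load /= (negbTE ne) /=. have := IH u ein; rewrite /load /setch. lia.
Qed.

Lemma load_rem cl e0 x : uniq (map ent_id cl) -> e0 \in cl ->
  load (rem_client (ent_id e0) cl) x + (ent_ch e0 == Some x) = load cl x.
Proof.
elim: cl => //= e cl IH /andP[ni u]; rewrite in_cons => /orP[/eqP E|ein].
  subst e0.
  rewrite eqxx /load /=. rewrite (_ : count _ (rem_client _ cl) = count (fun e => ent_ch e == Some x) cl); first lia.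
  rewrite /rem_client count_filter; apply: eq_in_count => e' e'in /=.
  case: (ent_id e' =P ent_id e) => [h|]; last by rewrite andbT.
  by case/negP: ni; apply/mapP; exists e' => //; rewrite h.
have ne : ent_id e != ent_id e0.
  by apply/eqP => h; case/negP: ni; rewrite h; exact: map_f.
rewrite /load /= ne /=. have := IH u ein; rewrite /load /rem_client. lia.
Qed.

Lemma load2 cl c c' : c <> c' -> load cl c + load cl c' <= size cl.
Proof.
move=> ne; rewrite /load -count_predUI.
rewrite (eq_count (a1 := predI _ _) (a2 := pred0)); last first.
  by move=> e /=; case: eqP => //= ->; apply/eqP => -[].
by rewrite count_pred0 addn0 count_size.
Qed.

Lemma uniq_id cl e1 e2 : uniq (map ent_id cl) -> e1 \in cl -> e2 \in cl ->
  ent_id e1 = ent_id e2 -> e1 = e2.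
Proof.
elim: cl => //= e cl IH /andP[ni u]; rewrite !in_cons.
case/orP=> [/eqP->|h1]; case/orP=> [/eqP->|h2] // E.
- by case/negP: ni; rewrite E; apply: map_f.
- by case/negP: ni; rewrite -E; apply: map_f.
- exact: IH.
Qed.

Definition cd (cl : seq entry) :=
  (forall x, load cl x <= x.1) /\
  (forall c c', c <> c' -> c.1 = c'.1 -> 0 < load cl c < c.1 -> 0 < load cl c' < c'.1 -> False).

Definition ae (cl : seq entry) (L : seq label) :=
  [/\ uniq (map ent_id cl),
      forall e c, e \in cl -> ent_ch e = Some c -> c.1 = ent_w e &
      forall e c, e \in cl -> ent_ch e = Some c -> c.1 < 2 * cpow2 (lastn L (ent_id e))].

Lemma lastn_rcons_ne L i j m : j != i -> lastn (rcons L (LAlloc i m)) j = lastn L j.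
Proof. by move=> ne; rewrite -cats1 lastn_cat //= in_cons in_nil orbF. Qed.

Lemma ae_setch cl L e0 c m : ae cl L -> e0 \in cl -> c.1 = ent_w e0 -> c.1 < 2 * cpow2 m ->
  ae (setch cl (ent_id e0) (Some c)) (rcons L (LAlloc (ent_id e0) m)).
Proof.
case=> u hw hl e0in cw cm; split; first by rewrite map_setch.
- move=> e c' /mapP[e' e'in ->]; case: ifP => [/eqP E|_].
    have EE := uniq_id u e'in e0in E; subst e'. by move=> [<-]; rewrite cw.
  exact: hw.
- move=> e c' /mapP[e' e'in ->]; case: ifP => [/eqP E|ne].
    move=> [<-]; rewrite lastn_rcons // /= -E //.
  by move=> h; rewrite lastn_rcons_ne ?ne //; apply: hl.
Qed.

Lemma ae_rem cl L i : ae cl L -> ae (rem_client i cl) L.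
Proof.
case=> u hw hl; split.
- by apply: subseq_uniq u; apply: map_subseq; apply: filter_subseq.
- by move=> e c; rewrite mem_filter => /andP[_]; apply: hw.
- by move=> e c; rewrite mem_filter => /andP[_]; apply: hl.
Qed.

Lemma ae_cons cl L i w ch m : ae cl L -> i \notin map ent_id cl ->
  (forall c, ch = Some c -> c.1 = w /\ c.1 < 2 * cpow2 m) ->
  ae ((i, w, ch) :: cl) (rcons L (LAlloc i m)).
Proof.
case=> u hw hl ni hc; split; first by rewrite /= ni.
- move=> e c; rewrite in_cons => /orP[/eqP->|ein]; first by move/hc => [].
  exact: hw.
- move=> e c; rewrite in_cons => /orP[/eqP->|ein].
    by move/hc => [_]; rewrite lastn_rcons.
  have ne : ent_id e != i by apply/eqP => E; case/negP: ni; rewrite -E map_f.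
  by move=> h; rewrite lastn_rcons_ne //; apply: hl.
Qed.

Lemma cd_add cl cl' w c : cd cl -> place_ok cl w c ->
  (forall x, load cl' x = load cl x + (x == c)) -> cd cl'.
Proof.
move=> [C D] [cw [lc alt]] E; split.
  move=> x; rewrite E; case: eqP => [->|_]; last by rewrite addn0 C.
  by rewrite cw addn1.
have key : forall c2, c2 <> c -> c2.1 = c.1 -> 0 < load cl c2 < c2.1 -> False.
  move=> c2 ne e2 h2; case: alt => [[l0 _]|[l0 hn]].
    apply: (D c c2) => //; [by move=> E'; apply: ne | rewrite -cw in lc; lia].
  apply: (hn c2.2); rewrite -cw -e2 -surjective_pairing //.
move=> c1 c2 ne e12; rewrite !E.
case: (c1 =P c) => [h1|n1]; case: (c2 =P c) => [h2|n2].
- by case: ne; rewrite h1 h2.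
- rewrite addn0 addn1 => _ h; apply: (key c2) => //; by rewrite -e12 h1.
- rewrite addn0 addn1 => h _; apply: (key c1) => //; by rewrite e12 h2.
- rewrite !addn0; exact: D.
Qed.

Definition isA (l : label) := if l is LAlloc _ _ then true else false.

Lemma load_setch1 cl i w c x : uniq (map ent_id cl) -> (i, w, None) \in cl ->
  load (setch cl i (Some c)) x = load cl x + (x == c).
Proof.
move=> u h; have := load_setch (Some c) x u h => /=.
rewrite addn0 => ->; congr (_ + _); case: (x =P c) => [->|ne]; first by rewrite eqxx.
by case: eqP => // -[E]; case: ne.
Qed.

Lemma bigfix_inv n tau cl Lb cl' L : bigfix n tau cl Lb cl' -> tau = 2 * cpow2 n ->
  ae cl L -> cd cl ->
  [/\ ae cl' (L ++ Lb), cd cl', map ent_id cl' = map ent_id cl,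
      size cl' = size cl & all isA Lb].
Proof.
move=> bf; elim: bf L => {cl Lb cl'}.
  by move=> cl _ L _ a c; rewrite cats0.
move=> cl i w c Lb cl' iin wlt pok _ IH L et a cdc.
have u : uniq (map ent_id cl) by case: a.
have pc := pok; case: pc => cw _.
have cn : c.1 < 2 * cpow2 n.
  rewrite cw; move: wlt; rewrite et mulKn //; move: (cpow2 n) => k; lia.
have [a' c' m' s' all'] := IH (rcons L (LAlloc i n)) et
   (@ae_setch cl L (i, w, None) c n a iin cw cn)
   (cd_add cdc pok (fun x => @load_setch1 cl i w c x u iin)).
by rewrite -cats1 -catA in a'; split => //; rewrite ?m' ?map_setch ?s' ?size_map.
Qed.

Lemma eq_some (c x : nat * nat) : (Some c == Some x) = (x == c).
Proof. case: (x =P c) => [->|ne]; first by rewrite eqxx. by case: eqP => // -[E]; case: ne. Qed.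

Definition Inv (st : state) (L : seq label) :=
  [/\ ae (clients st) L, cd (clients st), tau st = 2 * cpow2 (cnt st)
    & cnt st = size (clients st)].

Lemma arr_inv st L i w tau1 L1 cl1 ch : Inv st L ->
  i \notin map ent_id (clients st) ->
  arr_update (cnt st).+1 (tau st) (clients st) tau1 L1 cl1 ->
  arr_place tau1 cl1 w ch ->
  Inv (State (cnt st).+1 tau1 ((i, w, ch) :: cl1)) (L ++ (L1 ++ [:: LAlloc i (cnt st).+1]))
  /\ all isA (L1 ++ [:: LAlloc i (cnt st).+1]).
Proof.
case: st => n t cl; rewrite /Inv /= => -[a cdc et en] ni au ap.
have [ht [a1 cd1 m1 s1 al1]] : tau1 = 2 * cpow2 n.+1 /\
   [/\ ae cl1 (L ++ L1), cd cl1, map ent_id cl1 = map ent_id cl, size cl1 = size cl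
     & all isA L1].
  move: au; rewrite /arr_update; case: ifP => [lt [-> bf]|].
    by split => //; apply: bigfix_inv bf _ a cdc.
  move=> nlt [-> -> ->]; split; last by rewrite cats0.
  have := cpow2_mono (leqnSn n); move: nlt; rewrite et; lia.
rewrite -m1 in ni.
have hc : forall c, ch = Some c -> c.1 = w /\ c.1 < 2 * cpow2 n.+1.
  move=> c E; move: ap; rewrite /arr_place E; case: ifP => // lt [c' [[<-] [-> _]]].
  by split => //; rewrite -ht ltnNge lt.
split; last by rewrite all_cat al1.
rewrite catA cats1; split => //=; last by rewrite s1 en.
- by apply: ae_cons.
- case E: ch => [c|].
    have pok : place_ok cl1 w c.
      by move: ap; rewrite /arr_place E; case: ifP => // _ [c' [[<-] //]].
    apply: cd_add cd1 pok _ => x; by rewrite /load /= eq_some addnC.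
  by move: cd1; rewrite /cd /load /=.
Qed.

Lemma nth_notin_take (T : eqType) (x0 : T) (s : seq T) p :
  uniq s -> p < size s -> nth x0 s p \notin take p s.
Proof.
move=> u lt; move: u; rewrite -{1}(cat_take_drop p s) cat_uniq => /and3P[_ nh _].
apply/negP => h; case/hasP: nh; exists (nth x0 s p); last exact: h.
have -> : nth x0 s p = nth x0 (drop p s) 0 by rewrite nth_drop addn0.
by rewrite mem_nth // size_drop subn_gt0.
Qed.

Lemma load_exc cl T x :
  load (map (fun e => if exceeds T e then (e.1, None) else e) cl) x =
  if 2 * T < x.1 then 0 else load cl x.
Proof.
rewrite /load count_map; case: ifP => h.
  apply/eqP; rewrite -leqn0 leqNgt -has_count; apply/hasP => -[e _] /=.
  rewrite /exceeds; case E: (ent_ch e) => [c|] /=; last by rewrite E.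
  case: ifP => hc //=; rewrite E eq_some => /eqP ec; by move: hc; rewrite -ec h.
apply: eq_count => e /=; rewrite /exceeds; case E: (ent_ch e) => [c|] /=; last by rewrite E.
case: ifP => hc /=; rewrite ?E //; rewrite eq_some; case: (x =P c) => // ec; by move: h; rewrite ec hc.
Qed.

Definition fexc T (e : entry) : entry := if exceeds T e then (e.1, None) else e.

Lemma deptau_inv n1 t0 cl1 L' : ae cl1 L' -> cd cl1 ->
  let: (t', LT, cl2) := dep_tau n1 t0 cl1 in
  [/\ ae cl2 (L' ++ LT), cd cl2, size cl2 = size cl1 &
      forall p j m, nth dflt_label LT p = LToBig j m -> 2 * m <= lastn (L' ++ take p LT) j].
Proof.
move=> [u hw hl] [C D]; rewrite /dep_tau; case: ifP => _; last first.
  split; rewrite ?cats0 //; by case.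
set T := 2 * cpow2 n1.
have nin : forall e, e \in cl1 -> ~~ exceeds T e ->
    ent_id e \notin map ent_id [seq x <- cl1 | exceeds T x].
  move=> e ein ne; apply/mapP => -[e' e'in E].
  rewrite mem_filter in e'in; case/andP: e'in => ex e'in.
  by have EE := uniq_id u ein e'in E; subst e'; rewrite ex in ne.
have mapLT : map lab_client [seq LToBig (ent_id e) n1 | e <- cl1 & exceeds T e] =
             map ent_id [seq x <- cl1 | exceeds T x] by rewrite -map_comp.
split.
- split.
  + by rewrite -map_comp (eq_map (g := ent_id)) // => e /=; case: ifP.
  + move=> e c /mapP[e' e'in ->]; case: ifP => // _; exact: hw.
  + move=> e c /mapP[e' e'in ->]; case: ifP => // ne h.
    by rewrite lastn_cat ?mapLT ?nin ?ne //; apply: hl.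
- split => [x|c c']; rewrite ?load_exc.
    by case: ifP => // _; apply: C.
  case: ifP => //; case: ifP => // _ _; exact: D.
- by rewrite size_map.
- move=> p j m; set s := [seq x <- cl1 | exceeds T x].
  case: (ltnP p (size s)) => lp; last by rewrite nth_default ?size_map.
  rewrite (nth_map (0, 0, None)) // => -[Ej Em].
  have us : uniq (map ent_id s).
    by apply: subseq_uniq u; apply: map_subseq; apply: filter_subseq.
  rewrite -map_take lastn_cat; last first.
    rewrite -map_comp /= -Ej -(nth_map _ 0) //.
    by rewrite map_take nth_notin_take // size_map.
  have : nth (0, 0, None) s p \in s by apply: mem_nth.
  rewrite mem_filter => /andP[]; rewrite /exceeds.
  case E: (ent_ch _) => [c|] // hc ein.
  have := hl _ _ ein E; rewrite Ej -Em => h2; apply: cpow2_key; lia.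
Qed.

Lemma cd_from cl cl' : cd cl -> (forall x, load cl' x <= x.1) ->
  (forall x, 0 < load cl' x < x.1 -> 0 < load cl x < x.1) -> cd cl'.
Proof. move=> [C D] C' h; split => // c c' ne e h1 h2; exact: (D c c' ne e (h _ h1) (h _ h2)). Qed.

Lemma size_rem cl e0 : uniq (map ent_id cl) -> e0 \in cl ->
  (size (rem_client (ent_id e0) cl)).+1 = size cl.
Proof.
move=> u ein; rewrite /rem_client size_filter.
have := count_predC (fun e => ent_id e == ent_id e0) cl.
rewrite (_ : count _ cl = 1) => [<-|]; first by rewrite add1n.
rewrite -(count_map ent_id (pred1 (ent_id e0))) count_uniq_mem // map_f //.
Qed.

Lemma depc_inv cl L i w ch L1 cl1 : ae cl L -> cd cl -> (i, w, ch) \in cl ->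
  dep_compact (size cl).-1 w (rem_client i cl) ch L1 cl1 ->
  [/\ ae cl1 (L ++ L1), cd cl1, size cl1 = (size cl).-1 & all isA L1].
Proof.
move=> a [C D] ein dc.
have u : uniq (map ent_id cl) by case: a.
have hw : forall e c, e \in cl -> ent_ch e = Some c -> c.1 = ent_w e by case: a.
have lr := fun x => @load_rem cl (i, w, ch) x u ein; rewrite /= in lr.
have sr := size_rem u ein; rewrite /= in sr.
have ar := @ae_rem cl L i a.
have Cr : forall x, load (rem_client i cl) x <= x.1.
  by move=> x; apply: leq_trans (C x); rewrite -lr leq_addr.
case E: ch dc lr => [c|] /=; last first.
  move=> [-> ->] lr; rewrite cats0 -sr; split => //.
  by apply: cd_from (conj C D) Cr _ => x; rewrite -lr addn0.
have cw : c.1 = w by rewrite (hw _ _ ein) //; rewrite E.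
case: ifP => [/eqP z [-> ->] lr|nz].
  rewrite cats0 -sr; split => //; apply: cd_from (conj C D) Cr _ => x.
  rewrite -lr eq_some; case: (x =P c) => [->|_]; first by rewrite z.
  by rewrite addn0.
case=> [[nc [-> ->]] lr|].
  rewrite cats0 -sr; split => //; split => // c1 c2 ne e12.
  have same : forall x, x <> c -> load (rem_client i cl) x = load cl x.
    by move=> x nx; rewrite -lr eq_some; case: (x =P c) => // _; rewrite addn0.
  case: (c1 =P c) => [h1|n1]; case: (c2 =P c) => [h2|n2].
  - by case: ne; rewrite h1 h2.
  - move=> _ h; have c2w : c2.1 = w by rewrite -e12 h1.
    by apply: (nc c2) => //; rewrite -c2w.
  - move=> h _; have c1w : c1.1 = w by rewrite e12 h2.
    by apply: (nc c1) => //; rewrite -c1w.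
  - rewrite !same //; exact: D.
move=> [c' [e [nc' [c'w [hc' [erc [ech [-> ->]]]]]]]] lr.
have same : forall x, x <> c -> load (rem_client i cl) x = load cl x.
  by move=> x nx; rewrite -lr eq_some; case: (x =P c) => // _; rewrite addn0.
have nz' : 0 < load (rem_client i cl) c by rewrite lt0n nz.
have lcw : load cl c = w.
  apply/eqP; rewrite eqn_leq -{1}cw C /= leqNgt; apply/negP => lt.
  apply: (D c c') => //; first by move=> E'; apply: nc'; rewrite E'.
  - by rewrite cw c'w.
  - by rewrite cw; move: (lr c); rewrite eq_some eqxx /=; lia.
  - rewrite -(same c'); last by move=> E'; apply: nc'.
    by rewrite c'w.
have wn : w <= (size cl).-1.
  have l2 := load2 cl nc'; have sc' := same c' nc'.
  move: hc'; rewrite sc' => hc2; lia.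
have ur : uniq (map ent_id (rem_client i cl)) by case: ar.
have ls := fun x => @load_setch _ e (Some c) x ur erc; rewrite ech in ls.
split.
- rewrite cats1; apply: ae_setch => //.
  + rewrite cw -c'w; case: ar => _ hwr _; exact: hwr.
  + rewrite cw; have := leq_cpow2 (size cl).-1.
    have : 0 < cpow2 (size cl).-1 by rewrite /cpow2 expn_gt0.
    move: (cpow2 _) => k; lia.
- apply: cd_from (conj C D) _ _ => x; have l1 := ls x; have l2 := lr x; have Cx := C x;
    move: l1 l2 Cx; rewrite /ent_id !eq_some /=;
    (case: (x =P c) => [xc|nx]; case: (x =P c') => [xc'|nx']) => /=.
  + by case: nc'; rewrite -xc -xc'.
  + subst x; lia.
  + subst x; lia.
  + lia.
  + by case: nc'; rewrite -xc -xc'.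
  + subst x; move: lcw; rewrite -cw; lia.
  + subst x; move: hc'; rewrite -c'w; lia.
  + lia.
- by rewrite size_map -sr.
- by [].
Qed.

Lemma allA_nth s p j m : all isA s -> nth dflt_label s p <> LToBig j m.
Proof.
move=> al; case: (ltnP p (size s)) => lp; last by rewrite nth_default.
by move: (all_nthP dflt_label al p lp); case: (nth _ _ _).
Qed.

Definition Gd (L : seq label) := forall k j m, nth dflt_label L k = LToBig j m ->
  2 * m <= lastn (take k L) j.

Lemma step_inv st ev L' st' L : Inv st L -> step st ev L' st' ->
  Inv st' (L ++ L') /\ (forall p j m, nth dflt_label L' p = LToBig j m ->
     2 * m <= lastn (L ++ take p L') j).
Proof.
move=> I s; move: I; case: s => {st ev L' st'}.
  move=> st i w tau1 L1 cl1 ch _ ni au ap I.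
  have [I' al] := arr_inv I ni au ap; split => // p j m h.
  by case: (@allA_nth _ p j m al).
move=> st i w ch L1 cl1 ein dc I.
case: st I ein dc => n t cl; rewrite /Inv /= => -[a cdc et en] ein dc.
rewrite en in dc *.
have [a1 cd1 s1 al1] := depc_inv a cdc ein dc.
have := deptau_inv (size cl).-1 t a1 cd1.
have sz : 0 < size cl by case: (cl) ein.
case E: (dep_tau _ _ _) => [[t' LT] cl2] /= [a2 cd2 s2 hp].
split.
  split => //; rewrite ?catA // ?s2 ?s1 //.
  move: E; rewrite /dep_tau; case: ifP => [_ [<-] //|nlt [<-] _ _].
  have := cpow2_mono (leq_pred (size cl)); move: nlt; rewrite et en; lia.
move=> p j m; rewrite nth_cat take_cat; case: ifP => lp.
  move=> h; case: (@allA_nth L1 p j m al1); exact: h.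
by move=> h; rewrite catA; apply: hp.
Qed.

Lemma run_inv evs st L : run evs st L -> Inv st L /\ Gd L.
Proof.
elim => {evs st L}.
  split; last by move=> k j m; rewrite nth_nil.
  by split => //=.
move=> evs st L ev L' st' _ [I G] s.
have [I' hp] := step_inv I s; split; first exact: I'.
move=> k j m.
rewrite nth_cat take_cat; case: ifP => lk; first exact: G.
by move/hp.
Qed.

Lemma lastn_take L k' d i :
  k'.+1 + d <= size L ->
  (forall m, k' < m < k'.+1 + d -> lab_client (nth dflt_label L m) != i) ->
  lastn (take (k'.+1 + d) L) i = lastn (take k'.+1 L) i.
Proof.
elim: d => [|d IH] hs hm; first by rewrite addn0.
rewrite addnS (@take_nth _ dflt_label (k'.+1 + d)); last lia.
rewrite -cats1 lastn_cat /=.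
  apply: IH; first lia. by move=> m /andP[a b]; apply: hm; rewrite a /=; lia.
by rewrite in_cons in_nil orbF eq_sym; apply: hm; rewrite /=; lia.
Qed.

Theorem lemma3 (evs : seq event) (st : state) (L : seq label)
    (k k' i n n' : nat) :
  run evs st L ->
  nth dflt_label L k = LToBig i n ->
  k' < k ->
  lab_client (nth dflt_label L k') = i ->
  lab_n (nth dflt_label L k') = n' ->
  (forall m, k' < m < k -> lab_client (nth dflt_label L m) != i) ->
  2 * n <= n'.
Proof.
move=> r hk lt hc hn hm.
have [_ G] := run_inv r.
have := G _ _ _ hk.
have ks : k < size L.
  by case: (ltnP k (size L)) => // h; move: hk; rewrite nth_default.
have -> : k = k'.+1 + (k - k'.+1) by lia.
rewrite lastn_take; first last.
- by move=> m hm'; apply: hm; lia.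
- lia.
rewrite (@take_nth _ dflt_label k'); last lia.
by rewrite lastn_rcons ?hn.
Qed.
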